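(* Suppose $F$ is symmetric ($F(-i)=1-F(i)$ for all $i$), and consider the infinite-learning recommendation system with threshold $R\in(0,1)$. Let $\lambda=q_1/q_2$, $\sigma=q_H/q_L$ and, for $\lambda\ne1$, $\tilde i_\infty=\frac{(\sigma-1)(\lambda+1)}{2(1+\sigma)(\lambda-1)}$. Then (i) every receiver type $i\in[-1/2,1/2]$ buys the product if it is good; (ii) no receiver type buys the product if it is bad; (iii) if the product is controversial, then (a) if $\lambda>1$, all receiver types $i\ge\tilde i_\infty$ buy the product; (b) if $\lambda<1$, all receiver types $i\le\tilde i_\infty$ buy the product; (c) if $\lambda=1$, all receiver types buy the product if $\sigma\le1$ and none buys it if $\sigma>1$.
   Context: Setting. Consumer types are $i\in[-1/2,1/2]$, distributed according to a continuous cumulative distribution function $F$ with full support on $[-1/2,1/2]$. A product has a quality vector $(Q_1,Q_2)\in\{0,1\}^2$; a type-$i$ consumer gets payoff $(1/2+i)Q_1+(1/2-i)Q_2$. Version $(1,1)$ is called good, $(0,0)$ bad, and $(1,0),(0,1)$ controversial; their prior probabilities are $q_H,q_1,q_2,q_L$ (for $(1,1),(1,0),(0,1),(0,0)$), all strictly positive and summing to $1$. Given a threshold $R\in(0,1)$, each sender, with type drawn independently from $F$, gives a buy recommendation if her payoff from the product is at least $R$ and a don't-buy recommendation otherwise. In the infinite-learning system the receiver observes the recommendations of infinitely many such independent senders; this reveals whether the product is good, bad or controversial, and if controversial the receiver's posterior on $(1,0),(0,1)$ is $(q_1/(q_1+q_2),q_2/(q_1+q_2))$. The receiver of type $i$ buys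 the recommended product if its posterior expected payoff is at least $U_i^0=q_H+(1/2+i)q_1+(1/2-i)q_2$, the expected payoff of an unrecommended alternative, and otherwise buys the alternative. *)

(* Defs.v *)
From Stdlib Require Import Reals Lra.
Open Scope R_scope.

(* Quality versions: Good = (1,1), C10 = (1,0), C01 = (0,1), Bad = (0,0). *)
Inductive version := Good | C10 | C01 | Bad.

Definition Q1 (v : version) : R :=
  match v with Good | C10 => 1 | _ => 0 end.
Definition Q2 (v : version) : R :=
  match v with Good | C01 => 1 | _ => 0 end.

Definition payoff (i : R) (v : version) : R :=
  (1/2 + i) * Q1 v + (1/2 - i) * Q2 v.

Definition is_type_cdf (F : R -> R) : Prop :=
  (forall x y, x <= y -> F x <= F y) /\
  continuity F /\
  (forall x, x <= -1/2 -> F x = 0) /\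
  (forall x, 1/2 <= x -> F x = 1) /\
  (forall x y, -1/2 <= x -> x < y -> y <= 1/2 -> F x < F y).

Definition symmetric_cdf (F : R -> R) : Prop :=
  forall i, -1/2 <= i <= 1/2 -> F (- i) = 1 - F i.

Definition recommends (Rthr s : R) (v : version) : Prop := payoff s v >= Rthr.

(* Receiver's posterior over versions in the infinite-learning system, given
   the true version v: good and bad are revealed; a controversial version
   yields posterior (q1/(q1+q2), q2/(q1+q2)) on ((1,0),(0,1)). *)
Definition inf_posterior (q1 q2 : R) (v : version) (w : version) : R :=
  match v with
  | Good => match w with Good => 1 | _ => 0 end
  | Bad => match w with Bad => 1 | _ => 0 end
  | C10 | C01 => match w with
                 | C10 => q1 / (q1 + q2)
                 | C01 => q2 / (q1 + q2)
                 | _ => 0 end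
  end.

Definition post_payoff (q1 q2 i : R) (v : version) : R :=
  inf_posterior q1 q2 v Good * payoff i Good
  + inf_posterior q1 q2 v C10 * payoff i C10
  + inf_posterior q1 q2 v C01 * payoff i C01
  + inf_posterior q1 q2 v Bad * payoff i Bad.

(* expected payoff of the unrecommended alternative *)
Definition U0 (qH q1 q2 i : R) : R := qH + (1/2 + i) * q1 + (1/2 - i) * q2.

Definition buys (qH q1 q2 i : R) (v : version) : Prop :=
  post_payoff q1 q2 i v >= U0 qH q1 q2 i.

(* Main.v *)
Require Import Defs.
From Stdlib Require Import Reals Lra Psatz.
Open Scope R_scope.

Lemma contro_post q1 q2 i v : (v = C10 \/ v = C01) ->
  post_payoff q1 q2 i v = (q1 * (1/2 + i) + q2 * (1/2 - i)) / (q1 + q2).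
Proof.
  intros [-> | ->]; unfold post_payoff, inf_posterior, payoff, Q1, Q2;
  unfold Rdiv; ring.
Qed.

Lemma contro_buys qH q1 q2 qL i v : (v = C10 \/ v = C01) ->
  0 < q1 -> 0 < q2 -> qH + q1 + q2 + qL = 1 ->
  (buys qH q1 q2 i v <->
   (q1 + q2) * (qH - qL) <= 2 * i * (q1 - q2) * (qH + qL)).
Proof.
  intros Hv h1 h2 hs. unfold buys, U0. rewrite (contro_post _ _ _ _ Hv).
  set (A := q1 * (1/2 + i) + q2 * (1/2 - i)).
  assert (HS : 0 < q1 + q2) by lra.
  assert (E : A / (q1 + q2) - (qH + (1/2 + i) * q1 + (1/2 - i) * q2)
     = (2 * i * (q1 - q2) * (qH + qL) - (q1 + q2) * (qH - qL)) / (2 * (q1 + q2))).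
  { unfold A. field_simplify; [| lra | lra].
    replace qL with (1 - qH - q1 - q2) by lra. field. lra. }
  split; intro H.
  - assert (0 <= (2 * i * (q1 - q2) * (qH + qL) - (q1 + q2) * (qH - qL)) / (2 * (q1 + q2))) by lra.
    assert (0 <= 2 * i * (q1 - q2) * (qH + qL) - (q1 + q2) * (qH - qL)); [|lra].
    replace (2 * i * (q1 - q2) * (qH + qL) - (q1 + q2) * (qH - qL)) with
      ((2 * i * (q1 - q2) * (qH + qL) - (q1 + q2) * (qH - qL)) / (2 * (q1 + q2)) * (2*(q1+q2))) by (field; lra).
    apply Rmult_le_pos; lra.
  - assert (0 <= (2 * i * (q1 - q2) * (qH + qL) - (q1 + q2) * (qH - qL)) / (2 * (q1 + q2))).
    { unfold Rdiv. apply Rmult_le_pos; [lra|]. left; apply Rinv_0_lt_compat; lra. }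
    lra.
Qed.

Theorem lemma4 (F : R -> R) (Rthr qH q1 q2 qL : R) :
  is_type_cdf F -> symmetric_cdf F ->
  0 < Rthr < 1 ->
  0 < qH -> 0 < q1 -> 0 < q2 -> 0 < qL -> qH + q1 + q2 + qL = 1 ->
  let lam := q1 / q2 in
  let sig := qH / qL in
  let itil := (sig - 1) * (lam + 1) / (2 * (1 + sig) * (lam - 1)) in
  (forall i, -1/2 <= i <= 1/2 -> buys qH q1 q2 i Good) /\
  (forall i, -1/2 <= i <= 1/2 -> ~ buys qH q1 q2 i Bad) /\
  (forall v, (v = C10 \/ v = C01) ->
     (lam > 1 -> forall i, -1/2 <= i <= 1/2 -> itil <= i -> buys qH q1 q2 i v) /\
     (lam < 1 -> forall i, -1/2 <= i <= 1/2 -> i <= itil -> buys qH q1 q2 i v) /\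
     (lam = 1 ->
        (sig <= 1 -> forall i, -1/2 <= i <= 1/2 -> buys qH q1 q2 i v) /\
        (sig > 1 -> forall i, -1/2 <= i <= 1/2 -> ~ buys qH q1 q2 i v))).
Proof.
  intros _ _ _ hH h1 h2 hL hs lam sig itil.
  split; [|split].
  - intros i Hi. unfold buys, U0, post_payoff, inf_posterior, payoff, Q1, Q2. nra.
  - intros i Hi. unfold buys, U0, post_payoff, inf_posterior, payoff, Q1, Q2. nra.
  - intros v Hv.
    assert (Hit : forall (Hne : q1 <> q2), itil = (q1 + q2) * (qH - qL) / (2 * (q1 - q2) * (qH + qL))).
    { intro Hne. unfold itil, lam, sig. field.
      split; [lra|split; [intro; apply Hne; lra| split; lra]]. }
    assert (Hlam : lam = q1 / q2) by reflexivity.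
    split; [|split].
    + intros Hl i Hi Hle. apply (contro_buys qH q1 q2 qL); auto.
      assert (q1 > q2).
      { assert (q1 = lam * q2) by (unfold lam; field; lra). nra. }
      rewrite Hit in Hle by lra.
      set (X := (q1 + q2) * (qH - qL)) in *. set (D := 2 * (q1 - q2) * (qH + qL)) in *.
      assert (0 < D) by (unfold D; nra).
      assert (X <= i * D).
      { replace X with (X / D * D) by (field; lra). apply Rmult_le_compat_r; lra. }
      unfold X, D in *. nra.
    + intros Hl i Hi Hle. apply (contro_buys qH q1 q2 qL); auto.
      assert (q1 < q2).
      { assert (q1 = lam * q2) by (unfold lam; field; lra). nra. }
      rewrite Hit in Hle by lra.
      assert (d : 0 < 2 * (q2 - q1) * (qH + qL)) by nra.
      replace ((q1 + q2) * (qH - qL) / (2 * (q1 - q2) * (qH + qL)))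
        with (- ((q1 + q2) * (qH - qL)) / (2 * (q2 - q1) * (qH + qL))) in Hle
        by (field; lra).
      set (X := - ((q1 + q2) * (qH - qL))) in *. set (D := 2 * (q2 - q1) * (qH + qL)) in *.
      assert (i * D <= X).
      { replace X with (X / D * D) by (field; lra). apply Rmult_le_compat_r; lra. }
      unfold X, D in *. nra.
    + intros Hl.
      assert (q1 = q2).
      { assert (q1 = lam * q2) by (unfold lam; field; lra). rewrite Hl in H. lra. }
      assert (sig * qL = qH) by (unfold sig; field; lra).
      split.
      * intros Hs i Hi. apply (contro_buys qH q1 q2 qL); auto. rewrite H in *. assert (qH <= qL) by nra. nra.
      * intros Hs i Hi Hb. apply (contro_buys qH q1 q2 qL) in Hb; auto. rewrite H in *. assert (qH > qL) by nra. nra.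
Qed.
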